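(* Let $q$ be a prime power, $n\ge1$ and $L\ge 2$ integers, and $r\in[0,\frac{L}{L+1})$ with $rn\in\mathbb{N}$, such that $n-\lceil\frac{L+1}{L}rn\rceil+1>(L-1)\frac{q}{q-1}$. Then no linear code $C\subseteq\mathbb{F}_q^n$ of dimension $n-\lceil\frac{L+1}{L}rn\rceil+1$ is $(r,L)$ list-decodable.
   Context: A linear $[n,k]_q$ code is a $k$-dimensional subspace of $\mathbb{F}_q^n$. $B_t(v)$ is the Hamming ball of radius $t$ around $v$ (Hamming distance = number of differing coordinates). A code $C\subseteq\mathbb{F}_q^n$ is $(r,L)$ list-decodable if $|B_{rn}(v)\cap C|\le L$ for every $v\in\mathbb{F}_q^n$. *)

(* Defs.v *)
From HB Require Import structures.
From mathcomp Require Import all_boot all_order all_algebra all_field.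
Set Implicit Arguments. Unset Strict Implicit. Unset Printing Implicit Defensive.
Import Order.TTheory GRing.Theory Num.Theory.
Local Open Scope ring_scope.

Definition hamming (F : eqType) (n : nat) (u v : 'rV[F]_n) : nat :=
  #|[set i : 'I_n | u 0 i != v 0 i]|.

Definition hball (F : finFieldType) (n : nat) (t : rat) (v : 'rV[F]_n)
  : {set 'rV[F]_n} :=
  [set c : 'rV[F]_n | ((hamming v c)%:R <= t)%R].

Definition list_decodable (F : finFieldType) (n : nat)
  (C : {vspace 'rV[F]_n}) (r : rat) (L : nat) : Prop :=
  forall v : 'rV[F]_n,
    (#|hball (r *+ n) v :&: [set c : 'rV[F]_n | c \in C]| <= L)%N.

(* Main.v *)
Require Import Defs.
From HB Require Import structures.
From mathcomp Require Import all_boot all_order all_algebra all_field.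
From mathcomp Require Import zify.
Import Order.TTheory GRing.Theory Num.Theory.
Local Open Scope ring_scope.
Set Implicit Arguments. Unset Strict Implicit.
Lemma inj_into (D T : finType) (A : {set T}) : (#|D| <= #|A|)%N ->
  exists g : D -> T, injective g /\ forall x, g x \in A.
Proof.
move=> le; exists (fun x => enum_val (widen_ord le (enum_rank x))); split.
  by move=> x y /enum_val_inj /(congr1 val) /= /val_inj /enum_rank_inj.
by move=> x; exact: enum_valP.
Qed.

Lemma blocks (F : finFieldType) n (D : finType) (R : {set 'I_n}) (w : 'rV[F]_n) (c : D -> 'rV[F]_n) (u : nat) :
  (forall i, exists b, forall j, j \in R -> j != b -> c i 0 j = w 0 j) ->
  (#|D| * u <= #|~: R|)%N ->
  exists v : 'rV[F]_n, forall i, leq (#|R| - 1 + u)%N #|[set j | v 0 j == c i 0 j]|.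
Proof.
move=> hc le.
have le' : (#|{: D * 'I_u}| <= #|~:R|)%N by rewrite card_prod card_ord.
have [g [ginj gA]] := inj_into le'.
exists (\row_j if j \in R then w 0 j else if [pick x | g x == j] is Some x then c x.1 0 j else 0).
move=> i; have [b hb] := hc i.
set G := [set g (i, p) | p : 'I_u].
have cG : #|G| = u.
  rewrite card_imset ?card_ord // => p p' /ginj; case=> ->; done.
have dis : (R :\ b) :&: G = set0.
  apply/setP => j; rewrite !inE; apply/negbTE; apply/negP => /andP [/andP [_ jR]] /imsetP [p _ hj].
  by move: (gA (i, p)); rewrite -hj inE jR.
have sub : (R :\ b) :|: G \subset [set j | (\row_j if j \in R then w 0 j else if [pick x | g x == j] is Some x then c x.1 0 j else 0) 0 j == c i 0 j].
  apply/subsetP => j; rewrite inE => /orP [].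
    rewrite !inE mxE => /andP [jb jR]; rewrite jR hb //.
  move=> /imsetP [p _ ->]; rewrite inE mxE.
  have := gA (i, p); rewrite inE => /negbTE ->.
  case: pickP => [x /eqP /ginj -> //| /(_ (i, p))]; by rewrite eqxx.
apply: leq_trans (subset_leq_card sub).
rewrite cardsU dis cards0 subn0 cG leq_add2r.
have := cardsD1 b R; case: (b \in R) => /= ->; first by rewrite add1n subn1.
by rewrite add0n leq_subr.
Qed.
Lemma finish (F : finFieldType) n (C : {vspace 'rV[F]_n}) (r : rat) (L m : nat) (D : finType)
  (R : {set 'I_n}) (w : 'rV[F]_n) (c : D -> 'rV[F]_n) (u : nat) :
  r *+ n = m%:R -> injective c -> (forall i, c i \in C) ->
  (forall i, exists b, forall j, j \in R -> j != b -> c i 0 j = w 0 j) ->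
  #|D| = L.+1 -> (#|D| * u <= #|~: R|)%N -> (n <= #|R| - 1 + u + m)%N ->
  ~ list_decodable C r L.
Proof.
move=> hm ci cC hc cD hu hn hld.
have [v hv] := blocks hc hu.
have := hld v; apply/negP; rewrite -ltnNge -cD.
rewrite -cardsT -(card_imset _ ci); apply: subset_leq_card; apply/subsetP => x /imsetP [i _ ->].
rewrite !inE cC andbT hm ler_nat /hamming.
have := hv i.
have : addn #|[set j | v 0 j != c i 0 j]| #|[set j | v 0 j == c i 0 j]| = n.
  rewrite -[n in RHS]card_ord -(cardsC [set j | v 0 j == c i 0 j]) addnC; congr (_ + _).
  by apply: eq_card => j; rewrite !inE.
move=> h1 h2. set a := #|[set j | v 0 j != c i 0 j]| in h1 *. set b := #|[set j | v 0 j == c i 0 j]| in h1 h2. move: hn h1 h2. set cR := #|R|. lia.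
Qed.

Section Info.
Variable F : finFieldType.

Lemma info n (b : seq 'rV[F]_n) : free b -> exists I : {set 'I_n}, exists e : 'I_n -> 'rV[F]_n,
  [/\ #|I| = size b, (forall d, d \in I -> e d \in <<b>>%VS) &
      (forall d d', d \in I -> d' \in I -> e d 0 d' = (d == d')%:R)].
Proof.
elim: b => [|x b IH] /=.
  exists set0, (fun _ => 0); split; first by rewrite cards0.
    by move=> d; rewrite in_set0.
  by move=> d; rewrite in_set0.
rewrite free_cons => /andP [xnot fb].
have [I [e [cI eb ed]]] := IH fb.
have sub : (<<b>> <= <<x :: b>>)%VS by apply: sub_span => y yb; rewrite inE yb orbT.
set x' := x - \sum_(d in I) x 0 d *: e d.
have x'0 : x' != 0.
  apply: contra xnot => /eqP h.
  have -> : x = \sum_(d in I) x 0 d *: e d by move/eqP: h; rewrite subr_eq0 => /eqP.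
  by apply: memv_suml => d dI; apply: memvZ; exact: eb.
have x'I : forall d, d \in I -> x' 0 d = 0.
  move=> d dI; rewrite !mxE summxE (bigD1 d) //= !mxE ed // eqxx mulr1.
  rewrite big1 ?addr0 ?subrr // => d'' /andP [d''I nd].
  by rewrite !mxE ed // (negbTE nd) mulr0.
have [d0 hd0] : exists d0, x' 0 d0 != 0.
  apply/existsP; apply: contraR x'0; rewrite negb_exists => /forallP h.
  by apply/eqP/rowP => j; rewrite [RHS]mxE; have := h j; rewrite negbK => /eqP.
have d0I : d0 \notin I by apply: contra hd0 => /x'I ->.
have x'm : x' \in <<x :: b>>%VS.
  apply: memvB; first by apply: memv_span; rewrite inE eqxx.
  by apply: memv_suml => d dI; apply: memvZ; apply: (subvP sub); exact: eb.
set y := (x' 0 d0)^-1 *: x'.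
have y0 : y 0 d0 = 1 by rewrite mxE mulVf.
have yI : forall d, d \in I -> y 0 d = 0.
  move=> d dI; rewrite /y [LHS]mxE. by rewrite (x'I d dI) mulr0.
have ym : y \in <<x :: b>>%VS by exact: memvZ.
clearbody y.
exists (d0 |: I), (fun d => if d == d0 then y else e d - e d 0 d0 *: y); split.
- by rewrite cardsU1 d0I cI.
- move=> d; case: (eqVneq d d0) => [_ _| nd]; first exact: ym.
  rewrite in_setU1 (negbTE nd) /= => dI. by apply: memvB; [apply: (subvP sub); exact: eb | apply: memvZ; exact: ym].
- move=> d d'; rewrite !in_setU1 => /orP [/eqP -> | dI] /orP [/eqP -> | d'I].
  + by rewrite eqxx.
  + rewrite eqxx yI //; case: eqP => // h; by rewrite h d'I in d0I.
  + have nd : d != d0 by apply: contra d0I => /eqP <-.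
    by rewrite (negbTE nd) !mxE y0 mulr1 subrr.
  + have nd : d != d0 by apply: contra d0I => /eqP <-.
    by rewrite (negbTE nd) !mxE yI // mulr0 subr0 ed.
Qed.
End Info.
Lemma arith (F : finFieldType) (n L : nat) (m : nat) (C : {vspace 'rV[F]_n})
  (hL : (2 <= L)%N)
  (hk : (n%:Z - Num.ceil ((L.+1)%:R / L%:R * (m%:R : rat)) + 1)%:~R
          > (L.-1)%:R * (#|F|%:R / (#|F|.-1)%:R) :> rat)
  (hdim : (\dim C)%:Z = n%:Z - Num.ceil ((L.+1)%:R / L%:R * (m%:R : rat)) + 1) :
  exists s : nat, [/\ (L.+1 * m <= L * s)%N, (L * (s - 1) < L.+1 * m)%N, (1 <= s)%N,
     \dim C + s = n.+1 & ((L.-1) * #|F| < \dim C * (#|F|.-1))%N].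
Proof.
have q2 : (1 < #|F|)%N.
  apply/card_gt1P; exists 0, 1; split => //; rewrite eq_sym; exact: oner_neq0.
set S := Num.ceil _ in hk hdim.
have La : 0 < (L%:R : rat) by rewrite ltr0n; lia.
have hs0 : ((L.+1 * m)%:Z <= L%:Z * S)%R.
  rewrite -(ler_int rat) intrM.
  change ((L.+1 * m)%:R <= L%:R * S%:~R :> rat).
  apply: le_trans (ler_wpM2l (ltW La) (ceil_ge _)).
  by rewrite natrM mulrA mulrCA mulfV ?mulr1 // gt_eqF.
have hs1 : (L%:Z * (S - 1) < (L.+1 * m)%:Z)%R.
  rewrite -(ltr_int rat) intrM.
  change (L%:R * (S - 1)%:~R < (L.+1 * m)%:R :> rat).
  have -> : (L.+1 * m)%:R = L%:R * ((L.+1)%:R / L%:R * (m%:R : rat)).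
    by rewrite natrM mulrA mulrCA mulfV ?mulr1 // gt_eqF.
  by rewrite ltr_pM2l //; exact: ceilB1_lt.
have hkq : ((L.-1) * #|F| < \dim C * (#|F|.-1))%N.
  rewrite -hdim in hk.
  have qa : 0 < ((#|F|.-1)%:R : rat) by rewrite ltr0n; lia.
  rewrite -(ltr_nat rat) !natrM.
  have -> : (L.-1)%:R * (#|F|%:R : rat) = (L.-1)%:R * (#|F|%:R / (#|F|.-1)%:R) * (#|F|.-1)%:R.
    by rewrite -!mulrA mulVf ?mulr1 // gt_eqF.
  by rewrite ltr_pM2r //; exact: hk.
have dn : (\dim C <= n)%N.
  have := dimvS (subvf C); rewrite dimvf dim_matrix. lia.
have S0 : (0 <= S)%R by lia.
exists `|S|%N; split; nia.
Qed.

Unset Implicit Arguments.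

Theorem lemma3p5 (F : finFieldType) (n L : nat) (r : rat)
  (hn : (1 <= n)%N) (hL : (2 <= L)%N)
  (hr0 : 0 <= r) (hr1 : r < L%:R / (L.+1)%:R)
  (hrn : exists m : nat, r *+ n = m%:R)
  (hk : (n%:Z - Num.ceil ((L.+1)%:R / L%:R * (r *+ n)) + 1)%:~R
          > (L.-1)%:R * (#|F|%:R / (#|F|.-1)%:R) :> rat) :
  forall C : {vspace 'rV[F]_n},
    (\dim C)%:Z = n%:Z - Num.ceil ((L.+1)%:R / L%:R * (r *+ n)) + 1 ->
    ~ list_decodable C r L.
Proof.
move=> C hdim.
have [m hm] := hrn. rewrite hm in hk hdim.
have [s [hs0 hs1 hs1' hks hkq]] := arith hL hk hdim.
have [I [e [cI eb ed]]] := info (basis_free (vbasisP C)).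
rewrite size_tuple in cI.
have eC : forall d, d \in I -> e d \in C.
  by move=> d /eb; rewrite (span_basis (vbasisP C)).
have s2 : (2 <= s)%N.
  move: hs0 hs1 hs1'; case: (s) => [|[|s']] //.
  rewrite muln1 subnn muln0 => h1 h2 _.
  have m1 : (1 <= m)%N by move: h2; case: (m) => //; rewrite muln0.
  have : (L.+1 <= L.+1 * m)%N by rewrite leq_pmulr.
  lia.
have kn : (\dim C < n)%N by lia.
have [j0 j0I] : exists j0, j0 \notin I.
  apply/existsP; rewrite -negb_forall; apply/negP => /forallP hall.
  have : (#|'I_n| <= #|I|)%N by apply/subset_leq_card/subsetP => j _; exact: hall.
  by rewrite card_ord cI; lia.
set R := j0 |: I.
have cR : #|R| = (\dim C).+1 by rewrite cardsU1 j0I cI.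
have cRc : #|~: R| = (n - (\dim C).+1)%N.
  by have := cardsC R; rewrite card_ord cR; lia.
set u := (n - m - \dim C)%N.
have hu : (L.+1 * u <= #|~: R|)%N.
  have e1 : u = (s - 1 - m)%N by rewrite /u; lia.
  rewrite cRc e1; case: (leqP m (s - 1)) => hm'.
    have : (L.+1 * (s - 1 - m) + L.+1 * m = L.+1 * (s - 1))%N by rewrite -mulnDr subnK.
    have : (L.+1 * (s - 1) = L * (s - 1) + (s - 1))%N by rewrite mulSn addnC.
    lia.
  by rewrite (_ : s - 1 - m = 0)%N ?muln0 //; lia.
have hn' : (n <= #|R| - 1 + u + m)%N by rewrite cR; lia.
have cD : #|{: option 'I_L}| = L.+1 by rewrite card_option card_ord.
have Rj0 : j0 \in R by rewrite !inE eqxx.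
have RI : forall j, j \in R -> j != j0 -> j \in I.
  by move=> j; rewrite !inE => /orP [->|].
set Z := [set d in I | e d 0 j0 == 0].
have ZI : Z \subset I by apply/subsetP => d; rewrite inE => /andP [].
have cZ : #|I :\: Z| = (\dim C - #|Z|)%N.
  by rewrite cardsD (setIidPr ZI) cI.
have Zk : (#|Z| <= \dim C)%N by rewrite -cI; exact: subset_leq_card.
have ev : forall d a d', d \in I -> d' \in I -> (a *: e d) 0 d' = a * (d == d')%:R.
  by move=> d a d' dI d'I; rewrite mxE ed.
have : (L <= #|Z| * #|F|.-1)%N || (L <= #|I :\: Z|)%N.
  by rewrite cZ; apply/orP; nia.
case/orP => hcase.
-
  set T := setX Z [set a : F | a != 0].
  have cT : #|T| = (#|Z| * #|F|.-1)%N.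
    rewrite cardsX; congr (_ * _)%N.
    have -> : [set a : F | a != 0] = ~: [set 0] by apply/setP => a; rewrite !inE.
    by rewrite cardsC1.
  have [g [ginj gT]] := @inj_into _ _ T (ltac:(by rewrite card_ord cT) : (#|{: 'I_L}| <= #|T|)%N).
  have gZ : forall i, (g i).1 \in I /\ (g i).1 \in Z /\ (g i).2 != 0.
    move=> i; have := gT i; rewrite !inE => /andP [/andP [-> ->]] ->.
    by [].
  pose c (o : option 'I_L) := if o is Some i then (g i).2 *: e (g i).1 else 0.
  apply: (@finish F n C r L m (option 'I_L) R 0 c u hm) => //; last by rewrite cD.
  + move=> [i|] [i'|] //= h.
    * have [iI [_ ia]] := gZ i; have [i'I [_ _]] := gZ i'.
      have := congr1 (fun x : 'rV_n => x 0 (g i).1) h => /=.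
      rewrite !ev // eqxx mulr1.
      case: eqP => [e1 | _]; last by rewrite mulr0 => /eqP; rewrite (negbTE ia).
      rewrite mulr1 => e2; congr Some; apply: ginj.
      by case: (g i) e1 e2 => a1 a2; case: (g i') => b1 b2 /= -> ->.
    * have [iI [_ ia]] := gZ i.
      have := congr1 (fun x : 'rV_n => x 0 (g i).1) h => /=.
      by rewrite ev // eqxx mulr1 mxE => /eqP; rewrite (negbTE ia).
    * have [iI [_ ia]] := gZ i'.
      have := congr1 (fun x : 'rV_n => x 0 (g i').1) h => /=.
      by rewrite ev // eqxx mulr1 mxE => /eqP; rewrite eq_sym (negbTE ia).
  + move=> [i|] /=; last exact: mem0v.
    by apply: memvZ; apply: eC; have [] := gZ i.
  + move=> [i|] /=; last by exists j0 => j _ _.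
    exists (g i).1 => j jR jb; have [iI [iZ _]] := gZ i.
    rewrite [RHS]mxE.
    case: (eqVneq j j0) => [-> | jj0].
      by rewrite mxE; move: iZ; rewrite inE => /andP [_ /eqP ->]; rewrite mulr0.
    by rewrite ev ?(RI j) // eq_sym (negbTE jb) mulr0.
-
  have [g [ginj gT]] := @inj_into _ _ (I :\: Z) (ltac:(by rewrite card_ord) : (#|{: 'I_L}| <= #|I :\: Z|)%N).
  have gZ : forall i, g i \in I /\ e (g i) 0 j0 != 0.
    by move=> i; have := gT i; rewrite !inE => /andP [] /negP hz hI; rewrite hI in hz *; split=> //; apply/negP => hh; apply: hz.
  pose c (o : option 'I_L) := if o is Some i then (e (g i) 0 j0)^-1 *: e (g i) else 0.
  pose w : 'rV[F]_n := \row_j (j == j0)%:R.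
  apply: (@finish F n C r L m (option 'I_L) R w c u hm) => //; last by rewrite cD.
  + move=> [i|] [i'|] //= h.
    * have [iI ia] := gZ i; have [i'I _] := gZ i'.
      have := congr1 (fun x : 'rV_n => x 0 (g i)) h => /=.
      rewrite !ev // eqxx mulr1.
      case: eqP => [e1 | _]; first by rewrite (ginj _ _ e1).
      by rewrite mulr0 => /eqP; rewrite invr_eq0 (negbTE ia).
    * have [iI ia] := gZ i.
      have := congr1 (fun x : 'rV_n => x 0 (g i)) h => /=.
      by rewrite ev // eqxx mulr1 mxE => /eqP; rewrite invr_eq0 (negbTE ia).
    * have [iI ia] := gZ i'.
      have := congr1 (fun x : 'rV_n => x 0 (g i')) h => /=.
      by rewrite ev // eqxx mulr1 mxE => /eqP; rewrite eq_sym invr_eq0 (negbTE ia).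
  + move=> [i|] /=; last exact: mem0v.
    by apply: memvZ; apply: eC; have [] := gZ i.
  + move=> [i|] /=.
      exists (g i) => j jR jb; have [iI ia] := gZ i.
      rewrite /w [RHS]mxE.
      case: (eqVneq j j0) => [-> | jj0].
        by rewrite mxE mulVf // eqxx.
      by rewrite ev ?(RI j) // eq_sym (negbTE jb) mulr0.
    exists j0 => j jR jb; by rewrite /w !mxE (negbTE jb).
Qed.
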